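(* Let $a,b,c\in\mathbb{Z}$, let $A=\begin{pmatrix}0&a&-c\\-a&0&b\\c&-b&0\end{pmatrix}$, and consider the graded cluster algebra $\mathcal{A}\big((x_1,x_2,x_3),A,(b,c,a)\big)$. Let $[p_n,\dots,p_1]$ ($n\ge1$) be a mutation path without repetitions and let $z=\operatorname{var}_A[p_n,\dots,p_1]$. Writing $P=A_{[p_n,\dots,p_1]}$, we have $\deg(z)=(-1)^{n+1}P_{32}$ if $p_n=1$, $\deg(z)=(-1)^{n}P_{31}$ if $p_n=2$, and $\deg(z)=(-1)^{n+1}P_{21}$ if $p_n=3$.
   Context: Matrix mutation: for a $3\times3$ skew-symmetric integer matrix $B=(b_{ij})$, $\mu_k(B)=(b'_{ij})$ with $b'_{ij}=-b_{ij}$ if $i=k$ or $j=k$, $b'_{ij}=b_{ij}+\operatorname{sgn}(b_{ik})\max(b_{ik}b_{kj},0)$ otherwise. A seed $((x_1,x_2,x_3),B)$ mutates in direction $k$ to $(x',\mu_k B)$ with $x'_j=x_j$ ($j\ne k$) and $x'_k=\big(\prod_{b_{ik}>0}x_i^{b_{ik}}+\prod_{b_{ik}<0}x_i^{-b_{ik}}\big)/x_k$. Grading: $\deg x_i=g_i$ with $Bg=0$; under mutation at $k$ the degree vector becomes $g'$ with $g'_j=g_j$ ($j\neq k$), $g'_k=-g_k+\sum_{b_{ik}>0}b_{ik}g_i$, and cluster variables are homogeneous of these degrees. A mutation path $[p_n,\dots,p_1]$ means mutate first at $p_1$, then $p_2$, ..., finally $p_n$; it is without repetitions if $p_{i+1}\ne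 p_i$ for all $i$. $A_{[p_n,\dots,p_1]}=\mu_{p_n}\cdots\mu_{p_1}(A)$, and $\operatorname{var}_A[p_n,\dots,p_1]$ is the cluster variable newly created by the final mutation $\mu_{p_n}$ along this path starting from the initial seed. *)

(* Defs.v *)
From HB Require Import structures.
From mathcomp Require Import all_boot all_order all_algebra.
Set Implicit Arguments. Unset Strict Implicit. Unset Printing Implicit Defensive.
Import Order.TTheory GRing.Theory Num.Theory.
Local Open Scope ring_scope.

Definition mat_mut (k : 'I_3) (B : 'M[int]_3) : 'M[int]_3 :=
  \matrix_(i < 3, j < 3)
    if (i == k) || (j == k) then - B i j
    else B i j + Num.sg (B i k) * Num.max (B i k * B k j) 0.

(* Mutation of the degree vector g (indexed by 'I_3) in direction k w.r.t. B
   (the matrix BEFORE mutation). *)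
Definition deg_mut (k : 'I_3) (B : 'M[int]_3) (g : 'I_3 -> int) : 'I_3 -> int :=
  fun j => if j == k then - g k + \sum_(i < 3 | 0 < B i k) B i k * g i else g j.

(* A graded seed, forgetting the cluster: exchange matrix and degree vector. *)
Definition gseed := ('M[int]_3 * ('I_3 -> int))%type.

Definition gseed_mut (k : 'I_3) (s : gseed) : gseed :=
  (mat_mut k s.1, deg_mut k s.1 s.2).

(* A mutation path [p_n, ..., p_1] is the list [:: p_n; ...; p_1];
   p_1 is applied first. *)
Definition gseed_path (ps : seq 'I_3) (s : gseed) : gseed := foldr gseed_mut s ps.

Definition mat_path (ps : seq 'I_3) (B : 'M[int]_3) : 'M[int]_3 :=
  foldr mat_mut B ps.

(* Without repetitions: consecutive entries differ. *)
Definition no_rep (ps : seq 'I_3) : bool :=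
  if ps is p :: ps' then path (fun x y => x != y) p ps' else true.

Definition Amat (a b c : int) : 'M[int]_3 :=
  \matrix_(i < 3, j < 3)
    match nat_of_ord i, nat_of_ord j with
    | 0, 1 => a | 0, 2 => - c
    | 1, 0 => - a | 1, 2 => b
    | 2, 0 => c | 2, 1 => - b
    | _, _ => 0
    end.

Definition gvec (g1 g2 g3 : int) : 'I_3 -> int :=
  fun i => match nat_of_ord i with 0 => g1 | 1 => g2 | _ => g3 end.

(* Degree of var_A[p_n,...,p_1]: the new cluster variable created by the last
   mutation mu_{p_n} sits at position p_n; its degree is the p_n-th entry of the
   degree vector of the final graded seed. For the empty path we return 0
   (irrelevant: the theorem assumes n >= 1). *)
Definition deg_var (B : 'M[int]_3) (g : 'I_3 -> int) (ps : seq 'I_3) : int :=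
  if ps is p :: _ then (gseed_path ps (B, g)).2 p else 0.

(* Main.v *)
Require Import Defs.
From HB Require Import structures.
From mathcomp Require Import all_boot all_order all_algebra zify.
From mathcomp Require Import ring.
Import Order.TTheory GRing.Theory Num.Theory.
Local Open Scope ring_scope.

Ltac sgcase x :=
  let h := fresh "h" in
  case: (ltgtP x 0) => h;
  [ rewrite ?sgrN ?(ltr0_sg h) | rewrite ?sgrN ?(gtr0_sg h) | subst x; rewrite ?oppr0 ?sgr0 ].

Ltac finish x y z Hg He :=
  split;
  [ apply/matrixP; case=> [[|[|[|?]]] ?] //; case=> [[|[|[|?]]] ?] //; rewrite !mxE /=;
    sgcase x; sgcase y; sgcase z; nia
  | case=> [[|[|[|?]]] ?] //; rewrite /deg_mut /=; rewrite ?Hg /gvec /=;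
    rewrite ?big_mkcond ?big_ord_recl ?big_ord0 /= ?mxE /= ?Hg /gvec /=;
    case: He => ->;
    repeat case: ifP => ?; sgcase x; sgcase y; sgcase z; nia ].

Lemma mut_step (k : 'I_3) (x y z e : int) (g : 'I_3 -> int) :
  (e = 1 \/ e = -1) ->
  (forall i, g i = e * gvec y z x i) ->
  exists x' y' z', mat_mut k (Amat x y z) = Amat x' y' z' /\
    forall j, deg_mut k (Amat x y z) g j = - e * gvec y' z' x' j.
Proof.
move=> He Hg.
case: k => [[|[|[|k]]] Hk] //.
- exists (-x), (y - Num.sg x * Num.max (x*z) 0), (-z); finish x y z Hg He.
- exists (-x), (-y), (z - Num.sg y * Num.max (x*y) 0); finish x y z Hg He.
- exists (x - Num.sg z * Num.max (z*y) 0), (-y), (-z); finish x y z Hg He.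
Qed.

Lemma mat_path_fst (ps : seq 'I_3) (s : gseed) :
  mat_path ps s.1 = (gseed_path ps s).1.
Proof. by elim: ps => [|p ps IH] //=; rewrite IH. Qed.

Lemma path_inv (a b c : int) (ps : seq 'I_3) :
  exists x y z, (gseed_path ps (Amat a b c, gvec b c a)).1 = Amat x y z /\
    forall i, (gseed_path ps (Amat a b c, gvec b c a)).2 i
              = (-1) ^+ (size ps) * gvec y z x i.
Proof.
elim: ps => [|p ps [x [y [z [H1 H2]]]]].
  by exists a, b, c; split => // i; rewrite expr0 mul1r.
have He : (-1) ^+ size ps = 1 :> int \/ (-1) ^+ size ps = -1 :> int.
  rewrite -signr_odd; case: (odd _); rewrite ?expr0 ?expr1; by [right|left].
have [x' [y' [z' [E1 E2]]]] := @mut_step p _ _ _ _ _ He H2.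
exists x', y', z'; split => /=; first by rewrite H1.
by move=> i; rewrite H1 E2 exprS mulN1r.
Qed.

Theorem mainTheorem10 (a b c : int) (pn : 'I_3) (rest : seq 'I_3) :
  no_rep (pn :: rest) ->
  let A := Amat a b c in
  let P := mat_path (pn :: rest) A in
  let n := size (pn :: rest) in
  let z_deg := deg_var A (gvec b c a) (pn :: rest) in
    ((nat_of_ord pn = 0%N -> z_deg = (-1) ^+ n.+1 * P (inord 2) (inord 1)) /\
     (nat_of_ord pn = 1%N -> z_deg = (-1) ^+ n * P (inord 2) (inord 0)) /\
     (nat_of_ord pn = 2%N -> z_deg = (-1) ^+ n.+1 * P (inord 1) (inord 0))).
Proof.
move=> _ A P n z_deg.
have [x [y [z [H1 H2]]]] := path_inv a b c (pn :: rest).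
have HP : P = Amat x y z.
  by rewrite /P -H1 -(mat_path_fst _ (A, gvec b c a)).
have Hz : z_deg = (-1) ^+ n * gvec y z x pn by rewrite /z_deg /= -H2.
rewrite HP Hz /gvec !mxE !inordK //=.
split; [|split] => ->; rewrite /= ?exprS; ring.
Qed.
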